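(* Let $\mathbb{A}$ be a medial algebra over a field of characteristic not $2,3$ and let $\mathrm{Idm}^{\times}(\mathbb{A})$ be the set of nonzero idempotents $c$ of $\mathbb{A}$ with $\ker L_c=0$. Then $\mathrm{Idm}^{\times}(\mathbb{A})$, with the algebra multiplication, is a medial idempotent quasigroup. Furthermore, all $c\in\mathrm{Idm}^{\times}(\mathbb{A})$ have the same characteristic polynomial of $L_c$.
   Context: All algebras are commutative, possibly nonassociative, finite-dimensional. Medial: $(xy)(zw)=(xz)(yw)$ identically. $L_c:x\mapsto cx$. A quasigroup is a set with binary operation $\circ$ such that $a\circ x=b$ and $y\circ a=b$ have unique solutions; it is idempotent if $x\circ x=x$ and medial if $(x\circ y)\circ(z\circ w)=(x\circ z)\circ(y\circ w)$. *)

(* Defs.v *)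
From HB Require Import structures.
From mathcomp Require Import all_boot all_order all_algebra.
Set Implicit Arguments. Unset Strict Implicit. Unset Printing Implicit Defensive.
Import GRing.Theory.
Local Open Scope ring_scope.

Definition bilinear_mul (F : fieldType) (n : nat)
  (mul : 'rV[F]_n -> 'rV[F]_n -> 'rV[F]_n) : Prop :=
  (forall a x y z, mul (a *: x + y) z = a *: mul x z + mul y z) /\
  (forall a x y z, mul z (a *: x + y) = a *: mul z x + mul z y).

Definition commutative_mul (T : Type) (mul : T -> T -> T) : Prop :=
  forall x y, mul x y = mul y x.

Definition medial_op (T : Type) (mul : T -> T -> T) : Prop :=
  forall x y z w, mul (mul x y) (mul z w) = mul (mul x z) (mul y w).

Definition Idm_x (F : fieldType) (n : nat)
  (mul : 'rV[F]_n -> 'rV[F]_n -> 'rV[F]_n) (c : 'rV[F]_n) : Prop :=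
  c != 0 /\ mul c c = c /\ (forall x, mul c x = 0 -> x = 0).

Definition quasigroup_on (T : Type) (S : T -> Prop) (op : T -> T -> T) : Prop :=
  (forall a b, S a -> S b -> S (op a b)) /\
  (forall a b, S a -> S b ->
     (exists x, S x /\ op a x = b /\ forall x', S x' -> op a x' = b -> x' = x) /\
     (exists y, S y /\ op y a = b /\ forall y', S y' -> op y' a = b -> y' = y)).

Definition idempotent_on (T : Type) (S : T -> Prop) (op : T -> T -> T) : Prop :=
  forall x, S x -> op x x = x.

Definition medial_on (T : Type) (S : T -> Prop) (op : T -> T -> T) : Prop :=
  forall x y z w, S x -> S y -> S z -> S w ->
    op (op x y) (op z w) = op (op x z) (op y w).

Definition medial_idempotent_quasigroup (T : Type) (S : T -> Prop)
  (op : T -> T -> T) : Prop :=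
  quasigroup_on S op /\ idempotent_on S op /\ medial_on S op.

(* Main.v *)
Require Import Defs.
From HB Require Import structures.
From mathcomp Require Import all_boot all_order all_algebra.
Import GRing.Theory.
Local Open Scope ring_scope.

Lemma lin1E (F : fieldType) (n : nat) (f : 'rV[F]_n -> 'rV[F]_n) :
  linear f -> forall u, u *m lin1_mx f = f u.
Proof.
move=> lf u.
pose fL : {linear 'rV[F]_n -> 'rV[F]_n} :=
  HB.pack f (GRing.isLinear.Build _ _ _ _ f lf).
exact: (mul_rV_lin1 fL u).
Qed.

Lemma inj_unitmx (F : fieldType) (n : nat) (A : 'M[F]_n) :
  (forall v : 'rV[F]_n, v *m A = 0 -> v = 0) -> A \in unitmx.
Proof.
move=> H; rewrite unitmxE unitfE; apply/negP => /det0P [v vn0 vA].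
by move/eqP: vn0; apply; apply: H.
Qed.

Lemma charpoly_sim (F : fieldType) (n : nat) (A B P : 'M[F]_n) :
  P \in unitmx -> P *m B = A *m P -> char_poly B = char_poly A.
Proof.
move=> Pu PB.
pose Q := map_mx (@polyC F) P.
have QB : Q *m char_poly_mx B = char_poly_mx A *m Q.
  rewrite /char_poly_mx mulmxBr mulmxBl scalar_mxC; congr (_ - _).
  by rewrite /Q -!map_mxM PB.
have dQ : \det Q != 0.
  rewrite /Q (det_map_mx (@polyC F)) polyC_eq0.
  by rewrite unitmxE unitfE in Pu.
have := congr1 determinant QB; rewrite !det_mulmx [X in _ = X]mulrC.
by move/(mulfI dQ).
Qed.

Theorem proposition3p6 (F : fieldType) (n : nat)
  (mul : 'rV[F]_n -> 'rV[F]_n -> 'rV[F]_n) :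
  (2%N \notin [pchar F]) -> (3%N \notin [pchar F]) ->
  bilinear_mul mul -> commutative_mul mul -> medial_op mul ->
  medial_idempotent_quasigroup (Idm_x mul) mul /\
  (forall c d, Idm_x mul c -> Idm_x mul d ->
     char_poly (lin1_mx (mul c)) = char_poly (lin1_mx (mul d))).
Proof.
move=> _ _ [_ linr] com med.
have mE : forall c u, u *m lin1_mx (mul c) = mul c u.
  by move=> c; apply: lin1E => a x y; apply: linr.
have m0 : forall c, mul c 0 = 0 by move=> c; rewrite -(mE c) mul0mx.
have m0l : forall c, mul 0 c = 0 by move=> c; rewrite com m0.
have U : forall c, Idm_x mul c -> lin1_mx (mul c) \in unitmx.
  by move=> c [_ [_ ic]]; apply: inj_unitmx => v; rewrite mE; apply: ic.
have inj : forall c, Idm_x mul c -> forall x y, mul c x = mul c y -> x = y.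
  move=> c Hc x y; rewrite -!mE => /(congr1 (mulmx^~ (invmx (lin1_mx (mul c))))).
  by rewrite !mulmxK ?U.
have surj : forall c, Idm_x mul c -> forall z, mul c (z *m invmx (lin1_mx (mul c))) = z.
  by move=> c Hc z; rewrite -mE mulmxKV ?U.
have key : forall c d, Idm_x mul c ->
    lin1_mx (mul c) *m lin1_mx (mul (mul c d)) = lin1_mx (mul d) *m lin1_mx (mul c).
  move=> c d Hc; case: Hc => _ [cc _]; apply/eqP; apply/mulmxP => u.
  by rewrite !mulmxA !mE med cc.
have clos : forall c d, Idm_x mul c -> Idm_x mul d -> Idm_x mul (mul c d).
  move=> c d Hc Hd.
  have injcd : forall z, mul (mul c d) z = 0 -> z = 0.
    move=> z; rewrite -(surj c Hc z); set w := _ *m _.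
    case: (Hc) => [_ [cc _]]; rewrite med cc => E.
    have E1 : mul c (mul d w) = mul c 0 by rewrite E m0.
    have E2 : mul d w = mul d 0 by rewrite (inj c Hc _ _ E1) m0.
    by rewrite (inj d Hd _ _ E2) m0.
  split; last split; last exact: injcd.
  - apply/eqP => E; case: Hc => cn0 _; move/eqP: cn0; apply; apply: injcd.
    by rewrite E m0l.
  - by case: Hc => [_ [cc _]]; case: Hd => [_ [dd _]]; rewrite med cc dd.
have solve : forall a b, Idm_x mul a -> Idm_x mul b ->
    exists x, Idm_x mul x /\ mul a x = b /\
      forall x', Idm_x mul x' -> mul a x' = b -> x' = x.
  move=> a b Ha Hb.
  set x := b *m invmx (lin1_mx (mul a)).
  have ax : mul a x = b by apply: surj.
  case: (Ha) => [an0 [aa ia]]; case: (Hb) => [bn0 [bb ib]].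
  exists x; split; last split => //; last first.
    by move=> x' _ ax'; apply: (inj a Ha); rewrite ax ax'.
  split; last split.
  - apply/eqP => x0; move/eqP: bn0; apply; by rewrite -ax x0 m0.
  - apply: (inj a Ha); by rewrite -{1}aa med ax bb.
  - move=> z xz; apply: ia; apply: ib.
    by rewrite -ax -med aa xz m0.
split.
  split; last split.
  - split; first by move=> a b; apply: clos.
    move=> a b Ha Hb; split; first exact: solve.
    have [x [Hx [ax u]]] := solve a b Ha Hb.
    exists x; split => //; split; first by rewrite com.
    by move=> y Hy ya; apply: u => //; rewrite com.
  - by move=> x [_ []].
  - by move=> x y z w _ _ _ _; apply: med.
move=> c d Hc Hd.
have e1 := @charpoly_sim _ _ _ _ _ (U c Hc) (key c d Hc).
have e2 := @charpoly_sim _ _ _ _ _ (U d Hd) (key d c Hd).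
by rewrite -e2 com e1.
Qed.
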